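(* Let $U$ be a VLA-J-SS. Then $U$ satisfies the half Jacobi identity if and only if it satisfies the half commutator formula: for all homogeneous $u,v,w\in U$ and all $m,n\in\mathbb{N}$, $$u_m(v_nw)-\varepsilon_{u,v}v_n(u_mw)=\sum_{i\ge0}\binom{m}{i}(u_iv)_{m+n-i}w .$$
   Context: All spaces over $\mathbb{C}$; $\mathbb{N}=\{0,1,2,\dots\}$; $\varepsilon_{u,v}=(-1)^{|u||v|}$. A VLA-J-SS is a $\mathbb{Z}_2$-graded space $U$ with an even linear operator $D$ and bilinear products $u_nv$ ($n\in\mathbb{N}$) such that for homogeneous $u,v$: $u_nv=0$ for $n$ large; $(Du)_nv=-nu_{n-1}v$ (read as $0$ for $n=0$); $D(u_nv)=(Du)_nv+u_n(Dv)$; $|u_nv|=|u|+|v|$. The half Jacobi identity is: for all homogeneous $u,v,w\in U$ and all $k,m,n\in\mathbb{N}$, $\sum_{i\ge0}(-1)^i\binom{k}{i}(u_{m+k-i}(v_{n+i}w)-\varepsilon_{u,v}(-1)^kv_{n+k-i}(u_{m+i}w))=\sum_{i\ge0}\binom{m}{i}(u_{k+i}v)_{m+n-i}w$. *)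

(* Defs.v *)
From HB Require Import structures.
From mathcomp Require Import all_boot all_order all_algebra.
From mathcomp Require Import complex.
From mathcomp Require Import Rstruct.
Set Implicit Arguments. Unset Strict Implicit. Unset Printing Implicit Defensive.
Import Order.TTheory GRing.Theory Num.Theory.
Local Open Scope ring_scope.

Definition CC : fieldType := (Rdefinitions.R)[i].

(* Z_2 is modelled by bool, with addition addb.  A Z_2-grading of the F-vector
   space V is given by the two projections par false, par true onto the even
   and odd parts (V = V_0 (+) V_1).  u is homogeneous of parity a iff
   par a u = u. *)
Record vlajss (F : fieldType) (V : lmodType F) := VLAJSS {
  par : bool -> V -> V;
  par_lin : forall a (x : F) (u v : V), par a (x *: u + v) = x *: par a u + par a v;
  par_sum : forall u, par false u + par true u = u;
  par_par : forall a b u, par a (par b u) = if a == b then par b u else 0;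
  Dop : V -> V;
  Dop_lin : forall (x : F) (u v : V), Dop (x *: u + v) = x *: Dop u + Dop v;
  Dop_even : forall a u, par a u = u -> par a (Dop u) = Dop u;
  (* the bilinear products u_n v = prod n u v *)
  prod : nat -> V -> V -> V;
  prod_linl : forall n (x : F) (u u' w : V),
      prod n (x *: u + u') w = x *: prod n u w + prod n u' w;
  prod_linr : forall n (x : F) (u w w' : V),
      prod n u (x *: w + w') = x *: prod n u w + prod n u w';
  prod_trunc : forall a b u v, par a u = u -> par b v = v ->
      exists N, forall n, (N <= n)%N -> prod n u v = 0;
  prod_D : forall a b u v n, par a u = u -> par b v = v ->
      prod n (Dop u) v = - (prod n.-1 u v *+ n);
  D_prod : forall a b u v n, par a u = u -> par b v = v ->
      Dop (prod n u v) = prod n (Dop u) v + prod n u (Dop v);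
  prod_par : forall a b u v n, par a u = u -> par b v = v ->
      par (a (+) b) (prod n u v) = prod n u v
}.

Definition homog (F : fieldType) (V : lmodType F) (U : vlajss V) (a : bool) (u : V) :=
  par U a u = u.

(* epsilon_{u,v} = (-1)^{|u||v|} for u of parity a and v of parity b. *)
Definition eps (F : fieldType) (a b : bool) : F := (-1) ^+ (a && b).

(* Half Jacobi identity; the sums over i >= 0 are finite since the binomial
   coefficients vanish for i > k (resp. i > m). *)
Definition half_jacobi (F : fieldType) (V : lmodType F) (U : vlajss V) : Prop :=
  forall (a b c : bool) (u v w : V), homog U a u -> homog U b v -> homog U c w ->
  forall k m n : nat,
    \sum_(i < k.+1)
       (((-1) ^+ i) *+ 'C(k, i)) *:
         (prod U (m + k - i) u (prod U (n + i) v w)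
          - (eps F a b * (-1) ^+ k) *: prod U (n + k - i) v (prod U (m + i) u w))
    = \sum_(i < m.+1) prod U (m + n - i) (prod U (k + i) u v) w *+ 'C(m, i).

Definition half_commutator (F : fieldType) (V : lmodType F) (U : vlajss V) : Prop :=
  forall (a b c : bool) (u v w : V), homog U a u -> homog U b v -> homog U c w ->
  forall m n : nat,
    prod U m u (prod U n v w) - eps F a b *: prod U n v (prod U m u w)
    = \sum_(i < m.+1) prod U (m + n - i) (prod U i u v) w *+ 'C(m, i).

(* Main.v *)
Require Import Defs.
From mathcomp Require Import all_boot all_order all_algebra.
From mathcomp Require Import zify.
Set Implicit Arguments. Unset Strict Implicit. Unset Printing Implicit Defensive.
Import Order.TTheory GRing.Theory Num.Theory.
Local Open Scope ring_scope.

Section Aux.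
Variables (F : fieldType) (V : lmodType F).

Definition Ssum (f : nat -> nat -> V) (k m n : nat) : V :=
  \sum_(i < k.+1) (((-1) ^+ i) *+ 'C(k, i)) *: f (m + k - i)%N (n + i)%N.

Definition Tsum (g : nat -> nat -> V) (k m n : nat) : V :=
  \sum_(i < m.+1) g (m + n - i)%N (k + i)%N *+ 'C(m, i).

Lemma Ssum0 f m n : Ssum f 0 m n = f m n.
Proof. by rewrite /Ssum big_ord1 expr0 bin0 mulr1n scale1r addn0 subn0 addn0. Qed.
Lemma SsumS f k m n :
  Ssum f k.+1 m n = Ssum f k m.+1 n - Ssum f k m n.+1.
Proof.
rewrite /Ssum big_ord_recl /= expr0 bin0 mulr1n scale1r.
have -> : \sum_(i < k.+1) ((-1) ^+ (bump 0 i) *+ 'C(k.+1, bump 0 i)) *: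
      f (m + k.+1 - bump 0 i)%N (n + bump 0 i)%N =
    \sum_(i < k.+1) ((-1) ^+ i.+1 *+ 'C(k, i.+1)) *: f (m + k - i)%N (n + i.+1)%N
  - \sum_(i < k.+1) ((-1) ^+ i *+ 'C(k, i)) *: f (m + k - i)%N (n.+1 + i)%N.
  rewrite -sumrB; apply: eq_bigr => i _.
  rewrite /bump /= add1n binS mulrnDr exprS mulN1r mulNrn scalerDl scaleNr.
  have e1 : (m + k.+1 - i.+1 = m + k - i)%N by lia.
  have e2 : (n.+1 + i = n + i.+1)%N by lia.
  by rewrite e1 e2 !mulNrn !scaleNr.
rewrite addrA; congr (_ - _).
rewrite [in RHS]big_ord_recl big_ord_recr /= expr0 bin0 mulr1n scale1r.
rewrite bin_small // mulr0n scale0r addr0 addn0.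
by have -> : (m + k.+1 - 0 = m.+1 + k - 0)%N by lia.
Qed.

Lemma TsumS g k m n :
  Tsum g k m.+1 n = Tsum g k m n.+1 + Tsum g k.+1 m n.
Proof.
rewrite /Tsum big_ord_recl /= bin0.
under eq_bigr => i _ do rewrite /bump /= add1n binS mulrnDr.
rewrite big_split /= addrA; congr (_ + _).
  rewrite [in RHS]big_ord_recl big_ord_recr /= bin0 bin_small // mulr0n addr0.
  have -> : (m.+1 + n - 0 = m + n.+1 - 0)%N by lia.
  congr (_ + _); apply: eq_bigr => i _; rewrite /bump /= add1n.
  by congr (g _ _ *+ _); lia.
by apply: eq_bigr => i _; congr (g _ _ *+ _); lia.
Qed.
End Aux.

Theorem lemma6p1 (V : lmodType CC) (U : vlajss V) :
  half_jacobi U <-> half_commutator U.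
Proof.
split.
  move=> HJ a b c u v w hu hv hw m n.
  have := HJ a b c u v w hu hv hw 0%N m n.
  rewrite big_ord1 expr0 bin0 mulr1n scale1r mulr1 !addn0 !subn0.
  by move=> ->; apply: eq_bigr => i _; rewrite add0n.
move=> HC a b c u v w hu hv hw k m n.
pose fP := fun x y => prod U x u (prod U y v w).
pose fQ := fun x y => prod U x v (prod U y u w).
pose g := fun x y => prod U x (prod U y u v) w.
have conv : forall k m n,
  \sum_(i < k.+1)
       (((-1) ^+ i) *+ 'C(k, i)) *:
         (prod U (m + k - i) u (prod U (n + i) v w)
          - (eps CC a b * (-1) ^+ k) *: prod U (n + k - i) v (prod U (m + i) u w))
  = Ssum fP k m n - (eps CC a b * (-1) ^+ k) *: Ssum fQ k n m.
  move=> k' m' n'; rewrite /Ssum scaler_sumr -sumrB; apply: eq_bigr => i _.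
  by rewrite scalerBr !scalerA mulrC.
rewrite conv -/(Tsum g k m n).
elim: k m n => [|k IH] m n.
  rewrite !Ssum0 expr0 mulr1 (HC a b c u v w hu hv hw); apply: eq_bigr => i _; by rewrite /g add0n.
have TS : Tsum g k.+1 m n = Tsum g k m.+1 n - Tsum g k m n.+1.
  by rewrite TsumS addrAC subrr add0r.
rewrite !SsumS TS.
have E1 := IH m.+1 n. have E2 := IH m n.+1.
rewrite -E1 -E2.
rewrite exprS mulrCA mulN1r scaleNr !scalerBr.
set s := eps CC a b * (-1) ^+ k.
set x1 := Ssum fP k m.+1 n. set x2 := Ssum fP k m n.+1.
set y1 := s *: Ssum fQ k n.+1 m. set y2 := s *: Ssum fQ k n m.+1.
rewrite opprK !opprB -!addrA; congr (_ + _).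
by rewrite addrCA [RHS]addrCA (addrC (- x2)).
Qed.
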